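(* Let $\mathcal{Z}\subset\mathbb{R}^n$ be closed, Clarke regular and $\alpha$-prox-regular for some $\alpha>0$, $G:\mathcal{Z}\to\mathbb{S}^n_+$ a continuous metric, and $f:\mathcal{Z}\to\mathbb{R}^n$ a continuous vector field. For $K>0$ consider the anti-windup approximation $$\dot z\in F_K(z):=f(P_\mathcal{Z}(z))-\tfrac1KG^{-1}(P_\mathcal{Z}(z))\big(z-P_\mathcal{Z}(z)\big)$$ and the projected dynamical system $\dot z=\Pi^G_\mathcal{Z}[f](z)$, $z\in\mathcal{Z}$. If $\bar z^\star\in\mathcal{Z}$ is a weak equilibrium of the projected dynamical system, then there exists $K^\star>0$ such that for all $K\in(0,K^\star)$ there exists a weak equilibrium point $z_K^\star\in\bar z^\star+N_{\bar z^\star}\mathcal{Z}\cap\tfrac{1}{2\alpha}\operatorname{int}\mathbb{B}$ of the anti-windup approximation. Conversely, if $z_K^\star\in\mathcal{Z}+\tfrac{1}{2\alpha}\operatorname{int}\mathbb{B}$ is a weak equilibrium of the anti-windup approximation for some $K>0$, then $P_\mathcal{Z}(z_K^\star)$ is a weak equilibrium of the projected dynamical system.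
   Context: $\operatorname{int}\mathbb{B}$ is the open unit ball; $\mathbb{S}^n_+$ the symmetric positive definite matrices; $\|u\|_{G(x)}:=(u^TG(x)u)^{1/2}$. $P_\mathcal{Z}(z)$ is the (possibly set-valued) Euclidean projection onto $\mathcal{Z}$; expressions with it range over its elements. $T_x\mathcal{Z}$ is the tangent cone; Clarke regular means $x\mapsto T_x\mathcal{Z}$ is inner semicontinuous; $N_x\mathcal{Z}$ is the polar of $T_x\mathcal{Z}$; $\alpha$-prox-regular means for all $x\in\mathcal{Z}$, $\eta\in N_x\mathcal{Z}$: $\langle\eta,y-x\rangle\le\alpha\|\eta\|\|y-x\|^2$ for all $y\in\mathcal{Z}$. $\Pi^G_\mathcal{Z}[f](x):=\arg\min_{v\in T_x\mathcal{Z}}\|v-f(x)\|_{G(x)}$. A point $z^\star$ is a weak equilibrium of a system if the constant trajectory $z\equiv z^\star$ is a (Carathéodory) solution of it; for the anti-windup approximation this is equivalent to $0\in F_K(z^\star)$. *)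

(* Defs.v *)
From HB Require Import structures.
From mathcomp Require Import all_boot all_order all_algebra.
From mathcomp Require Import all_classical all_reals all_analysis.
Set Implicit Arguments. Unset Strict Implicit. Unset Printing Implicit Defensive.
Import Order.TTheory GRing.Theory Num.Theory.
Import numFieldNormedType.Exports.
Local Open Scope classical_set_scope.
Local Open Scope ring_scope.

Section Defs.
Variables (R : realType) (n : nat).
Notation V := 'rV[R]_n.

Definition edot (u v : V) : R := (u *m v^T) 0 0.
Definition enorm (u : V) : R := Num.sqrt (edot u u).

Definition gnorm (M : 'M[R]_n) (u : V) : R := Num.sqrt ((u *m M *m u^T) 0 0).

Definition spd (M : 'M[R]_n) : Prop :=
  M^T = M /\ forall u : V, u != 0 -> 0 < (u *m M *m u^T) 0 0.

Definition tangent_cone (Z : set V) (x : V) : set V :=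
  [set v | exists (t : nat -> R) (w : nat -> V),
     [/\ (forall k, 0 < t k), t @ \oo --> (0 : R), w @ \oo --> v &
         forall k, Z (x + t k *: w k)]].

(* Clarke regular: x |-> T_x Z is inner semicontinuous on Z (sequential form) *)
Definition clarke_regular (Z : set V) : Prop :=
  forall x v (xs : nat -> V), Z x -> tangent_cone Z x v ->
    (forall k, Z (xs k)) -> xs @ \oo --> x ->
    exists vs : nat -> V,
      (forall k, tangent_cone Z (xs k) (vs k)) /\ vs @ \oo --> v.

Definition normal_cone (Z : set V) (x : V) : set V :=
  [set eta | forall v, tangent_cone Z x v -> edot eta v <= 0].

Definition prox_regular (Z : set V) (alpha : R) : Prop :=
  forall x eta y, Z x -> normal_cone Z x eta -> Z y ->
    edot eta (y - x) <= alpha * enorm eta * enorm (y - x) ^+ 2.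

Definition euclid_proj (Z : set V) (z : V) : set V :=
  [set p | Z p /\ forall y, Z y -> enorm (z - p) <= enorm (z - y)].

Definition proj_field (Z : set V) (G : V -> 'M[R]_n) (f : V -> V) (x : V)
  : set V :=
  [set v | tangent_cone Z x v /\
     forall w, tangent_cone Z x w -> gnorm (G x) (v - f x) <= gnorm (G x) (w - f x)].

Definition FK (Z : set V) (G : V -> 'M[R]_n) (f : V -> V) (K : R) (z : V)
  : set V :=
  [set f p - K^-1 *: ((z - p) *m invmx (G p)) | p in euclid_proj Z z].

Definition weak_eq_aw Z G f K (z : V) : Prop := FK Z G f K z 0.
Definition weak_eq_pds Z G f (z : V) : Prop := Z z /\ proj_field Z G f z 0.

End Defs.

(* Main.v *)
Require Import Defs.
From HB Require Import structures.
From mathcomp Require Import all_boot all_order all_algebra.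
From mathcomp Require Import all_classical all_reals all_analysis.
From mathcomp Require Import ring lra.
From mathcomp Require pseudometric_normed_Zmodule.
Import Order.TTheory GRing.Theory Num.Theory.
Import numFieldNormedType.Exports.
Local Open Scope classical_set_scope.
Local Open Scope ring_scope.

Set Implicit Arguments. Unset Strict Implicit.
Section Alg.
Variables (R : realType) (n : nat).
Implicit Types (u v w : 'rV[R]_n) (M : 'M[R]_n).

Definition bil M u v : R := (u *m M *m v^T) 0 0.

Lemma edot_bil u v : edot u v = bil 1%:M u v.
Proof. by rewrite /edot /bil mulmx1. Qed.

Lemma bilC M u v : M^T = M -> bil M u v = bil M v u.
Proof.
move=> hM; rewrite /bil; transitivity ((u *m M *m v^T)^T 0 0); first by rewrite [RHS]mxE.
by rewrite !trmx_mul trmxK hM mulmxA.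
Qed.

Lemma bilDl M u1 u2 v : bil M (u1 + u2) v = bil M u1 v + bil M u2 v.
Proof. by rewrite /bil !mulmxDl mxE. Qed.
Lemma bilZl M a u v : bil M (a *: u) v = a * bil M u v.
Proof. by rewrite /bil -!scalemxAl mxE. Qed.
Lemma bilDr M u v1 v2 : bil M u (v1 + v2) = bil M u v1 + bil M u v2.
Proof. by rewrite /bil linearD /= mulmxDr mxE. Qed.
Lemma bilZr M a u v : bil M u (a *: v) = a * bil M u v.
Proof. by rewrite /bil linearZ /= -scalemxAr mxE. Qed.
Lemma bilBl M u1 u2 v : bil M (u1 - u2) v = bil M u1 v - bil M u2 v.
Proof. by rewrite -scaleN1r bilDl bilZl mulN1r. Qed.
Lemma bilBr M u v1 v2 : bil M u (v1 - v2) = bil M u v1 - bil M u v2.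
Proof. by rewrite -scaleN1r bilDr bilZr mulN1r. Qed.

Lemma edot_sum u v : edot u v = \sum_j u 0 j * v 0 j.
Proof. by rewrite /edot mxE; apply: eq_bigr => j _; rewrite mxE. Qed.

Lemma edot_ge0 u : 0 <= edot u u.
Proof. by rewrite edot_sum sumr_ge0 // => j _; rewrite -expr2 sqr_ge0. Qed.

Lemma edot_eq0 u : edot u u = 0 -> u = 0.
Proof.
rewrite edot_sum => /eqP; rewrite psumr_eq0; last by move=> j _; rewrite -expr2 sqr_ge0.
move=> /allP H; apply/rowP => j; rewrite mxE.
by have /(_ (mem_index_enum j)) := H j; rewrite /= mulf_eq0 orbb => /eqP.
Qed.

Lemma enorm_sqr u : enorm u ^+ 2 = edot u u.
Proof. by rewrite /enorm sqr_sqrtr // edot_ge0. Qed.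

Lemma enorm_ge0 u : 0 <= enorm u.
Proof. exact: sqrtr_ge0. Qed.

Lemma enorm_le u v : edot u u <= edot v v -> enorm u <= enorm v.
Proof. by move=> h; rewrite /enorm ler_sqrt // edot_ge0. Qed.

Lemma enorm_leE u v : enorm u <= enorm v -> edot u u <= edot v v.
Proof. by move=> h; rewrite -!enorm_sqr lerXn2r // ?nnegrE ?enorm_ge0. Qed.

Lemma enormZ a u : 0 <= a -> enorm (a *: u) = a * enorm u.
Proof.
move=> a0; rewrite /enorm !edot_bil bilZl bilZr mulrA sqrtrM ?mulr_ge0 //.
by rewrite -expr2 sqrtr_sqr ger0_norm.
Qed.

End Alg.
Set Implicit Arguments. Unset Strict Implicit.
Section S2.
Variables (R : realType) (n : nat).
Implicit Types (u v w : 'rV[R]_n) (M : 'M[R]_n).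

Lemma spd_ge0 M u : spd M -> 0 <= bil M u u.
Proof.
case=> _ h; have [->|u0] := eqVneq u 0; last exact/ltW/h.
by rewrite /bil !mul0mx mxE.
Qed.

Lemma spd_unit M : spd M -> M \in unitmx.
Proof.
case=> _ h; rewrite unitmxE unitfE; apply/det0P => -[v v0 vM].
by have := h v v0; rewrite vM mul0mx mxE ltxx.
Qed.

Lemma gnorm_le M u v : spd M -> bil M u u <= bil M v v -> Defs.gnorm M u <= Defs.gnorm M v.
Proof. by move=> hM h; rewrite /Defs.gnorm ler_sqrt //; apply: spd_ge0. Qed.

Lemma gnorm_leE M u v : spd M -> Defs.gnorm M u <= Defs.gnorm M v -> bil M u u <= bil M v v.
Proof. by move=> hM; rewrite /Defs.gnorm ler_sqrt //; apply: spd_ge0. Qed.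

Lemma tangent0 (Z : set 'rV[R]_n) x : Z x -> tangent_cone Z x 0.
Proof.
move=> Zx; exists (fun k => harmonic k), (fun=> 0); split.
- by move=> k; exact: harmonic_gt0.
- exact: cvg_harmonic.
- exact: cvg_cst.
- by move=> k; rewrite scaler0 addr0.
Qed.

Lemma tangentZ (Z : set 'rV[R]_n) x v s : 0 < s -> tangent_cone Z x v ->
  tangent_cone Z x (s *: v).
Proof.
move=> s0 [t [w [t0 tc wc Zt]]].
exists (fun k => t k * s^-1), (fun k => s *: w k); split.
- by move=> k; rewrite mulr_gt0 // invr_gt0.
- by rewrite -(mul0r s^-1); apply: cvgMr_tmp.
- exact: cvgZl_tmp.
- move=> k; rewrite scalerA mulrAC -mulrA divff ?mulr1 //; exact: lt0r_neq0.
Qed.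

End S2.
Set Implicit Arguments. Unset Strict Implicit.
Section S3.
Variables (R : realType) (n : nat).
Implicit Types (u v w : 'rV[R]_n) (M : 'M[R]_n).

Lemma edot_cvg (w1 w2 : nat -> 'rV[R]_n) v1 v2 :
  w1 @ \oo --> v1 -> w2 @ \oo --> v2 ->
  (fun k => edot (w1 k) (w2 k)) @ \oo --> edot v1 v2.
Proof.
move=> c1 c2.
have cj (w : nat -> 'rV[R]_n) v j : w @ \oo --> v -> (fun k => w k 0 j) @ \oo --> v 0 j.
  by move=> c; exact: (cvg_comp _ _ c (@coord_continuous R 1 n 0 j v)).
under eq_cvg do rewrite edot_sum.
rewrite edot_sum; apply: cvg_big => //.
  exact: (@pseudometric_normed_Zmodule.add_continuous R R^o).
by move=> j _; apply: cvgM; apply: cj.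
Qed.

End S3.
Set Implicit Arguments. Unset Strict Implicit.
Section S4.
Variables (R : realType) (n : nat).
Implicit Types (u v w a b : 'rV[R]_n) (M : 'M[R]_n).

Lemma edotC a b : edot a b = edot b a.
Proof. by rewrite !edot_bil bilC // trmx1. Qed.

Lemma edot_expB a b s : edot (a - s *: b) (a - s *: b) =
  edot a a - 2 * s * edot a b + s ^+ 2 * edot b b.
Proof.
have hC (x y : 'rV[R]_n) : bil 1%:M x y = bil 1%:M y x by rewrite bilC // trmx1.
rewrite !edot_bil bilBl !bilBr !bilZl !bilZr (hC b a).
ring.
Qed.

Lemma edotZl s a b : edot (s *: a) b = s * edot a b.
Proof. by rewrite !edot_bil bilZl. Qed.

Lemma proj_normal (Z : set 'rV[R]_n) z p : euclid_proj Z z p -> normal_cone Z p (z - p).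
Proof.
move=> [Zp hp] v [t [w [t0 tc wc Zt]]].
set eta := z - p.
have hk k : 0 <= t k * edot (w k) (w k) - 2 * edot eta (w k).
  have := enorm_leE (hp _ (Zt k)).
  rewrite opprD addrA -/eta edot_expB.
  move=> h.
  have h2 : 0 <= t k * (t k * edot (w k) (w k) - 2 * edot eta (w k)).
    by rewrite mulrBr !mulrA -expr2; lra.
  by rewrite pmulr_rge0 in h2.
have hc : (fun k => t k * edot (w k) (w k) - 2 * edot eta (w k)) @ \oo -->
   0 * edot v v - 2 * edot eta v.
  apply: cvgD; first by apply: cvgM => //; exact: edot_cvg.
  apply: cvgN; apply: cvgMl_tmp; apply: edot_cvg => //; exact: cvg_cst.
have : 0 <= 0 * edot v v - 2 * edot eta v by apply: (cvgr_to_ge hc); exact: nearW.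
rewrite mul0r sub0r oppr_ge0 => h; rewrite /eta in h; lra.
Qed.

Lemma proj_unique (Z : set 'rV[R]_n) alpha z p q y :
  prox_regular Z alpha -> 0 < alpha -> Z y -> enorm (z - y) < (2 * alpha)^-1 ->
  euclid_proj Z z p -> euclid_proj Z z q -> p = q.
Proof.
move=> prox a0 Zy zy hp hq.
have e1 : enorm (z - p) < (2 * alpha)^-1 by apply: le_lt_trans zy; exact: hp.2.
have e2 : 2 * alpha * enorm (z - p) < 1.
  have h2a : 0 < 2 * alpha by rewrite mulr_gt0.
  by rewrite -(ltr_pM2l h2a) mulfV ?gt_eqF in e1.
have eq1 : edot (z - q) (z - q) = edot (z - p) (z - p).
  apply/eqP; rewrite eq_le; apply/andP; split; apply: enorm_leE.
    exact: hq.2 _ hp.1.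
  exact: hp.2 _ hq.1.
have hz : z - q = (z - p) - 1 *: (q - p) by rewrite scale1r opprB addrA subrK.
rewrite hz edot_expB in eq1.
have pr := prox _ _ _ hp.1 (@proj_normal Z z p hp) hq.1.
rewrite enorm_sqr in pr.
have d0 := edot_ge0 (q - p).
have e0 := enorm_ge0 (z - p).
have h3 : (1 - 2 * alpha * enorm (z - p)) * edot (q - p) (q - p) <= 0.
  nra.
have : edot (q - p) (q - p) = 0.
  apply/eqP; rewrite eq_le d0 andbT.
  by rewrite -(pmulr_rle0 _ (_ : 0 < 1 - 2 * alpha * enorm (z - p))) // subr_gt0.
by move/edot_eq0/eqP; rewrite subr_eq0 => /eqP.
Qed.

End S4.
Set Implicit Arguments. Unset Strict Implicit.
Section S5.
Variables (R : realType) (n : nat).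
Implicit Types (u v w a b : 'rV[R]_n) (M : 'M[R]_n).

Lemma bil_expB M a b s : M^T = M -> bil M (s *: a - b) (s *: a - b) =
  s ^+ 2 * bil M a a - 2 * s * bil M a b + bil M b b.
Proof.
move=> hM; rewrite bilBl !bilBr !bilZl !bilZr (bilC b a hM); ring.
Qed.

Lemma bil_N M b : bil M (0 - b) (0 - b) = bil M b b.
Proof. by rewrite sub0r -scaleN1r bilZl bilZr mulrA mulN1r opprK mul1r. Qed.

Lemma bil_inv M w u : spd M -> bil M w (u *m invmx M) = edot w u.
Proof.
move=> hM; rewrite /bil /edot trmx_mul mulmxA -(mulmxA w M) trmx_inv hM.1.
by rewrite mulmxV ?spd_unit // mulmx1.
Qed.

Lemma edot_bilM M u v : M^T = M -> edot (u *m M) v = bil M v u.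
Proof. by move=> hM; rewrite -(bilC u v hM). Qed.

End S5.
Unset Implicit Arguments.
Set Strict Implicit.

Theorem proposition6p1 (R : realType) (n : nat) (Z : set 'rV[R]_n) (alpha : R)
  (G : 'rV[R]_n -> 'M[R]_n) (f : 'rV[R]_n -> 'rV[R]_n) :
  closed Z -> clarke_regular Z -> 0 < alpha -> prox_regular Z alpha ->
  (forall x, Z x -> spd (G x)) -> {within Z, continuous G} ->
  {within Z, continuous f} ->
  (forall zbar, weak_eq_pds Z G f zbar ->
     exists2 Kstar : R, 0 < Kstar &
       forall K : R, 0 < K < Kstar ->
         exists zK : 'rV[R]_n,
           [/\ weak_eq_aw Z G f K zK,
               normal_cone Z zbar (zK - zbar) &
               enorm (zK - zbar) < (2 * alpha)^-1]) /\
  (forall (K : R) (zK : 'rV[R]_n), 0 < K ->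
     (exists2 y, Z y & enorm (zK - y) < (2 * alpha)^-1) ->
     weak_eq_aw Z G f K zK ->
     forall p, euclid_proj Z zK p -> weak_eq_pds Z G f p).
Proof.
move=> _ _ a0 prox hG _ _; split.
- move=> zbar [Zz [_ hopt]].
  have hs := hG zbar Zz.
  set fz := f zbar; set Gz := G zbar; set eta := fz *m Gz.
  have hn : normal_cone Z zbar eta.
    move=> v hv; rewrite /eta edot_bilM; last exact: hs.1.
    rewrite leNgt; apply/negP => B0.
    set B := bil Gz v fz in B0.
    set q := bil Gz v v.
    have q0 : 0 <= q by apply: spd_ge0.
    set s := B / (q + 1).
    have s0 : 0 < s by rewrite divr_gt0 // ltr_wpDl.
    have sq : s * (q + 1) = B by rewrite /s mulfVK // gt_eqF // ltr_wpDl.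
    have := gnorm_leE hs (hopt _ (tangentZ s0 hv)).
    rewrite bil_N bil_expB ?hs.1 // -/B -/q -/fz => h.
    have h2 : 0 <= s * (s * q - 2 * B) by rewrite expr2 in h; nra.
    rewrite pmulr_rge0 // in h2.
    nra.
  have e0 := enorm_ge0 eta.
  have h2a : 0 < 2 * alpha by rewrite mulr_gt0.
  have hc : 0 < 2 * alpha * (enorm eta + 1) by rewrite mulr_gt0 // ltr_wpDl.
  exists (2 * alpha * (enorm eta + 1))^-1; first by rewrite invr_gt0.
  move=> K /andP[K0 KK].
  have hK : K * (2 * alpha * (enorm eta + 1)) < 1.
    by rewrite -(ltr_pM2r hc) mulVf ?gt_eqF in KK.
  exists (zbar + K *: eta).
  have hd : zbar + K *: eta - zbar = K *: eta by rewrite addrC addKr.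
  rewrite hd; split.
  + exists zbar; last first.
      rewrite hd -scalemxAl scalerA mulVf ?gt_eqF // scale1r /eta -mulmxA.
      by rewrite mulmxV ?spd_unit // mulmx1 subrr.
    split => // y Zy; rewrite hd; apply: enorm_le.
    have -> : zbar + K *: eta - y = K *: eta - 1 *: (y - zbar).
      by rewrite scale1r opprB addrA [zbar + _]addrC.
    rewrite edot_expB !edotZl.
    have pr := prox _ _ _ Zz hn Zy.
    rewrite enorm_sqr in pr.
    have D0 := edot_ge0 (y - zbar).
    have h1 : K * edot eta (y - zbar) <= K * (alpha * enorm eta * edot (y - zbar) (y - zbar)).
      by rewrite ler_wpM2l // ltW.
    have h3 : 0 <= (1 - 2 * K * alpha * enorm eta) * edot (y - zbar) (y - zbar).
      by rewrite mulr_ge0 // subr_ge0; nra.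
    lra.
  + by move=> v hv; rewrite edotZl; apply: mulr_ge0_le0; [exact: ltW | exact: hn].
  + rewrite enormZ ?ltW // -(ltr_pM2l h2a) mulfV ?gt_eqF //; nra.
- move=> K zK K0 [y Zy zy] [p0 hp0 e0] p hp.
  have <- := proj_unique prox a0 Zy zy hp0 hp.
  have hs := hG p0 hp0.1.
  split; first exact: hp0.1.
  split; first exact: tangent0 hp0.1.
  move=> w hw; apply: gnorm_le => //.
  move/subr0_eq: e0 => e0.
  have -> : w - f p0 = 1 *: w - f p0 by rewrite scale1r.
  rewrite bil_N bil_expB ?hs.1 // [X in 2 * 1 * bil _ _ X]e0 bilZr bil_inv //.
  have hn := proj_normal hp0.
  have := hn w hw; rewrite edotC => hn'.
  have q0 : 0 <= bil (G p0) w w by apply: spd_ge0.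
  have : K^-1 * edot w (zK - p0) <= 0 by rewrite mulr_ge0_le0 // invr_ge0 ltW.
  lra.
Qed.
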